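(* Let $G_p$ be the graph defined in the context. Then $\alpha(G_p)<\alpha_q(G_p)$. (More precisely, $\alpha(G_p)\le 5$ while $\alpha_q(G_p)\ge 6$.)
   Context: All graphs are finite and simple. $\alpha(X)$ denotes the (classical) independence number of $X$. For a finite simple graph $X$ and positive integers $s,d$, a quantum $s$-coclique matrix (in dimension $d$) is a $|V(X)|\times s$ array $P=(P_{vi})_{v\in V(X),\, i\in[s]}$ of orthogonal projections $P_{vi}\in\mathbb{C}^{d\times d}$ such that (a) $\sum_{v\in V(X)}P_{vi}=I_d$ for every $i\in[s]$; (b) $P_{vi}P_{uj}=0$ for all $i\neq j$ in $[s]$ and all adjacent vertices $u\sim v$; (c) $P_{vi}P_{vj}=0$ for all $v\in V(X)$ and all $i\neq j$ in $[s]$. The quantum independence number $\alpha_q(X)$ is the largest $s$ such that a quantum $s$-coclique matrix for $X$ exists for some $d\ge 1$. $G_p$ is the orthogonality graph of the following 24 vectors in $\mathbb{R}^4$ (vertices are the vectors; two are adjacent iff their standard inner product is $0$): $(1,0,0,0),(0,1,0,0),(0,0,1,0),(0,0,0,1)$; $(0,1,1,0),(1,0,0,-1),(1,0,0,1),(0,1,-1,0)$; $(1,1,1,1),(1,-1,1,-1),(1,-1,-1,1),(1,1,-1,-1)$; $(1,-1,0,0),(1,1,0,0),(0,0,1,1),(0,0,1,-1)$; $(-1,1,1,1),(1,1,1,-1),(1,-1,1,1),(1,1,-1,1)$; $(1,0,1,0),(0,1,0,1),(1,0,-1,0),(0,1,0,-1)$. *)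

(* Defs.v *)
From HB Require Import structures.
From mathcomp Require Import all_boot all_order all_algebra.
From mathcomp Require Import Rstruct complex.
Unset Printing Implicit Defensive.
Import Order.TTheory GRing.Theory Num.Theory.

Local Open Scope ring_scope.

Definition C : numClosedFieldType := (Rdefinitions.R)[i]%C.

(* A finite simple graph is given by a vertex finType V and an adjacency
   relation e (assumed symmetric and irreflexive where needed). *)

Definition independent (V : finType) (e : rel V) (S : {set V}) : bool :=
  [forall u in S, forall v in S, ~~ e u v].

Definition alpha (V : finType) (e : rel V) : nat :=
  \max_(S : {set V} | independent V e S) #|S|.

Definition is_projection (d : nat) (A : 'M[C]_d) : Prop :=
  A *m A = A /\ map_mx Num.conj A^T = A.

Definition quantum_coclique (V : finType) (e : rel V) (s d : nat)
    (P : V -> 'I_s -> 'M[C]_d) : Prop :=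
  [/\ (forall v i, is_projection d (P v i)),
      (forall i, \sum_(v : V) P v i = 1%:M),
      (forall (i j : 'I_s) (u v : V), i != j -> e u v -> P v i *m P u j = 0)
    & (forall (v : V) (i j : 'I_s), i != j -> P v i *m P v j = 0)].

Definition has_quantum_coclique (V : finType) (e : rel V) (s : nat) : Prop :=
  exists d : nat, (0 < d)%N /\ exists P : V -> 'I_s -> 'M[C]_d,
    quantum_coclique V e s d P.

(* "alpha X < alpha_q X", where alpha_q X is the largest s admitting a quantum
   s-coclique matrix: equivalently some s > alpha X admits one. *)
Definition alpha_lt_alpha_q (V : finType) (e : rel V) : Prop :=
  exists s : nat, (alpha V e < s)%N /\ has_quantum_coclique V e s.

Definition Gp_vecs : seq (int * int * int * int) :=
  [:: (1,0,0,0); (0,1,0,0); (0,0,1,0); (0,0,0,1);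
      (0,1,1,0); (1,0,0,-1); (1,0,0,1); (0,1,-1,0);
      (1,1,1,1); (1,-1,1,-1); (1,-1,-1,1); (1,1,-1,-1);
      (1,-1,0,0); (1,1,0,0); (0,0,1,1); (0,0,1,-1);
      (-1,1,1,1); (1,1,1,-1); (1,-1,1,1); (1,1,-1,1);
      (1,0,1,0); (0,1,0,1); (1,0,-1,0); (0,1,0,-1)]%Z.

Definition Gp_vec (v : 'I_24) : int * int * int * int :=
  nth (0, 0, 0, 0)%Z Gp_vecs v.

Definition dot4 (x y : int * int * int * int) : int :=
  let: (a1, a2, a3, a4) := x in let: (b1, b2, b3, b4) := y in
  a1 * b1 + a2 * b2 + a3 * b3 + a4 * b4.

Definition Gp : rel 'I_24 := fun u v => dot4 (Gp_vec u) (Gp_vec v) == 0.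
Arguments alpha {V} e.
Arguments alpha_lt_alpha_q {V} e.
Arguments has_quantum_coclique {V} e s.

(* Main.v *)
Require Import Defs.
From mathcomp Require Import all_boot all_order all_algebra ring.
Import GRing.Theory Num.Theory.

Definition Gpn (u v : nat) := (dot4 (nth (0,0,0,0)%Z Gp_vecs u) (nth (0,0,0,0)%Z Gp_vecs v) == 0)%R.
Definition chkA := all (fun a0 => all (fun a1 => all (fun a2 => all (fun a3 => all (fun a4 => all (fun a5 =>
  let f := fun k => nth 0%N [:: a0; a1; a2; a3; a4; a5] k in
  has (fun k1 => has (fun k2 => Gpn (4 * k1 + f k1) (4 * k2 + f k2)) (iota 0 6)) (iota 0 6))
  (iota 0 4)) (iota 0 4)) (iota 0 4)) (iota 0 4)) (iota 0 4)) (iota 0 4).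
Lemma chk1 : chkA. Proof. vm_compute. reflexivity. Qed.
Definition chkB := all (fun u => all (fun v => (u != v) ==> (u %/ 4 == v %/ 4) ==> Gpn u v) (iota 0 24)) (iota 0 24).
Lemma chk2 : chkB. Proof. vm_compute. reflexivity. Qed.

Lemma GpE (u v : 'I_24) : Gp u v = Gpn u v. Proof. by []. Qed.

Lemma ltdiv (v : 'I_24) : v %/ 4 < 6.
Proof. by rewrite ltn_divLR. Qed.

Lemma allIn n (P : pred nat) : all P (iota 0 n) -> forall a, a < n -> P a.
Proof. by move=> /allP H a la; apply: H; rewrite mem_iota. Qed.
Lemma allI4 (P : pred nat) : all P (iota 0 4) -> forall a, a < 4 -> P a.
Proof. by move=> /allP H a la; apply: H; rewrite mem_iota. Qed.
Lemma hasI6 (P : pred nat) : has P (iota 0 6) -> exists2 k, k < 6 & P k.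
Proof. by move=> /hasP [k]; rewrite mem_iota => /andP [_ h] p; exists k. Qed.

Definition phi (v : 'I_24) : 'I_6 := Ordinal (ltdiv v).

Lemma indep_le5 (S : {set 'I_24}) : independent _ Gp S -> #|S| <= 5.
Proof.
move=> /forallP HS.
have nadj u v : u \in S -> v \in S -> ~~ Gp u v.
  by move=> uS vS; have /implyP/(_ uS)/forallP/(_ v)/implyP/(_ vS) := HS u.
have inj : {in S &, injective phi}.
  move=> u v uS vS /(congr1 val) /= huv; apply/eqP; apply/negPn/negP => neq.
  have := nadj u v uS vS; rewrite GpE.
  have := chk2; rewrite /chkB => /allIn H1; have := H1 u (ltn_ord u) => /allIn /(_ v (ltn_ord v)).

  by rewrite neq huv eqxx => /= ->.
rewrite leqNgt; apply/negP => big.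
have full : phi @: S = setT.
  apply/eqP; rewrite eqEcard subsetT cardsT card_ord card_in_imset //.
have ex k : (k < 6) -> exists2 v, v \in S & v %/ 4 = k.
  move=> lk; have : Ordinal lk \in phi @: S by rewrite full inE.
  by case/imsetP=> v vS /(congr1 val) /= ->; exists v.
pose g k := odflt ord0 [pick v in S | v %/ 4 == k].
have gP k : k < 6 -> g k \in S /\ g k %/ 4 = k.
  move=> /ex [v vS hv]; rewrite /g; case: pickP => [w /andP [wS /eqP hw]|/(_ v)] //=.
  by rewrite vS hv eqxx.
pose G k := g k %% 4.
have GP k : k < 6 -> 4 * k + G k = g k.
  by move=> /gP [_ h]; rewrite /G {2}(divn_eq (g k) 4) h mulnC.
have G4 k : G k < 4 by rewrite /G ltn_mod.
have := chk1; rewrite /chkA.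
move/allI4/(_ _ (G4 0)); move/allI4/(_ _ (G4 1)); move/allI4/(_ _ (G4 2)).
move/allI4/(_ _ (G4 3)); move/allI4/(_ _ (G4 4)); move/allI4/(_ _ (G4 5)).
case/hasI6=> k1 lk1 /hasI6 [k2 lk2].
have Hn k : k < 6 -> nth 0 [:: G 0; G 1; G 2; G 3; G 4; G 5] k = G k.
  by case: k => [|[|[|[|[|[|]]]]]].
rewrite !Hn // !GP // -GpE.
by have := nadj (g k1) (g k2) (proj1 (gP _ lk1)) (proj1 (gP _ lk2)) => /negP.
Qed.

Local Open Scope ring_scope.

Definition vecl (v : nat) : seq int :=
  let: (a, b, c, d) := nth (0, 0, 0, 0)%Z Gp_vecs v in [:: a; b; c; d].
Definition cn (v k : nat) : int := nth 0 (vecl v) k.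

Lemma dotE (u w : nat) : dot4 (nth (0,0,0,0)%Z Gp_vecs u) (nth (0,0,0,0)%Z Gp_vecs w)
   = \sum_(k < 4) cn u k * cn w k.
Proof.
rewrite /cn /vecl; case: (nth _ Gp_vecs u) => [[[a b] c] d].
case: (nth _ Gp_vecs w) => [[[a' b'] c'] d'].
by rewrite !big_ord_recr big_ord0 /= add0r.
Qed.

Definition Pm (v : nat) : 'M[C]_4 := \matrix_(a, b) (cn v a * cn v b)%:~R.

Lemma PmM (u w : nat) : Pm u *m Pm w =
  (dot4 (nth (0,0,0,0)%Z Gp_vecs u) (nth (0,0,0,0)%Z Gp_vecs w))%:~R *:
     \matrix_(a, b) (cn u a * cn w b)%:~R.
Proof.
apply/matrixP=> a b; rewrite !mxE dotE rmorph_sum mulr_suml; apply: eq_bigr => k _.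
rewrite !mxE -!rmorphM /=.
suff -> : cn u a * cn u k * (cn w k * cn w b) = cn u k * cn w k * (cn u a * cn w b) by [].
ring.
Qed.

Definition nb (i : nat) : int := nth 0 [:: 1; 2; 4; 2; 4; 2] i.

Definition chkN := all (fun v => dot4 (nth (0,0,0,0)%Z Gp_vecs v) (nth (0,0,0,0)%Z Gp_vecs v) == nb (v %/ 4)) (iota 0 24).
Lemma chk3 : chkN. Proof. vm_compute. reflexivity. Qed.

Definition chkS := all (fun i => all (fun a => all (fun b =>
   foldr (fun v acc => (if (v %/ 4 == i)%N then cn v a * cn v b else 0) + acc) 0 (iota 0 24)
     == if (a == b)%N then nb i else 0) (iota 0 4)) (iota 0 4)) (iota 0 6).
Lemma chk4 : chkS. Proof. vm_compute. reflexivity. Qed.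

Lemma big_foldr (F : nat -> int) s : \sum_(v <- s) F v = foldr (fun v acc => F v + acc) 0 s.
Proof. by elim: s => [|x s IH]; rewrite ?big_nil ?big_cons ?IH. Qed.

Lemma nb_neq0 (i : 'I_6) : (nb i)%:~R != 0 :> C.
Proof. rewrite intr_eq0; by case: i => [[|[|[|[|[|[|]]]]]]]. Qed.

Lemma nrmE (v : 'I_24) : dot4 (nth (0,0,0,0)%Z Gp_vecs v) (nth (0,0,0,0)%Z Gp_vecs v) = nb (v %/ 4).
Proof. by move: chk3; rewrite /chkN => /allIn /(_ v (ltn_ord v)) /eqP. Qed.

Definition P (v : 'I_24) (i : 'I_6) : 'M[C]_4 :=
  if (v %/ 4 == i)%N then ((nb i)%:~R)^-1 *: Pm v else 0.

Lemma Pm_self (v : nat) : \matrix_(a, b) (cn v a * cn v b)%:~R = Pm v :> 'M[C]_4.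
Proof. by []. Qed.

Lemma P_proj v i : is_projection 4 (P v i).
Proof.
rewrite /P; case: ifP => [/eqP hv|_]; last by split; rewrite ?mul0mx // trmx0 map_mx0.
split.
  rewrite -scalemxAl -scalemxAr PmM nrmE hv Pm_self scalerA.
  by rewrite scalerA -mulrA mulVf ?nb_neq0 // mulr1.
apply/matrixP=> a b; rewrite !mxE rmorphM /= fmorphV /= !rmorph_int.
by rewrite [cn v b * _]mulrC.
Qed.

Lemma P_sum (i : 'I_6) : \sum_(v : 'I_24) P v i = 1%:M.
Proof.
apply/matrixP => a b; rewrite summxE !mxE.
pose F := fun v : nat => if (v %/ 4 == i)%N then cn v a * cn v b else 0.
transitivity ((nb i)%:~R^-1 * (\sum_(v < 24) F v)%:~R : C).
  rewrite rmorph_sum mulr_sumr; apply: eq_bigr => v _.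
  rewrite /P /F; case: ifP => _; by rewrite !mxE ?mulr0.
rewrite -(big_mkord xpredT F) big_foldr.
move: chk4; rewrite /chkS => /allIn /(_ i (ltn_ord i)) /allIn /(_ a (ltn_ord a)).
move=> /allIn /(_ b (ltn_ord b)) /eqP ->.
case: (a =P b) => [->|/eqP hab]; rewrite ?eqxx ?mulVf ?nb_neq0 //.
by rewrite ifN ?mulr0 // (inj_eq val_inj).
Qed.

Lemma P_adj (i j : 'I_6) (u v : 'I_24) : i != j -> Gp u v -> P v i *m P u j = 0.
Proof.
move=> _ huv; rewrite /P; case: ifP => _; last by rewrite mul0mx.
case: ifP => _; last by rewrite mulmx0.
rewrite -scalemxAl -scalemxAr PmM.
have -> : dot4 (nth (0,0,0,0)%Z Gp_vecs v) (nth (0,0,0,0)%Z Gp_vecs u) = 0.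
  move/eqP: huv; rewrite /Gp /Gp_vec.
  case: (nth _ Gp_vecs u) => [[[a b] c] d]; case: (nth _ Gp_vecs v) => [[[a' b'] c'] d'] /=.
  move=> h; rewrite -h; ring.
by rewrite scale0r !scaler0.
Qed.

Lemma P_orth (v : 'I_24) (i j : 'I_6) : i != j -> P v i *m P v j = 0.
Proof.
move=> hij; rewrite /P; case: ifP => [/eqP hi|_]; last by rewrite mul0mx.
case: ifP => [/eqP hj|_]; last by rewrite mulmx0.
by move: hij; rewrite -(inj_eq val_inj) /= -hi -hj eqxx.
Qed.

Lemma quantum6 : has_quantum_coclique Gp 6.
Proof.
exists 4; split => //; exists P; split.
- exact: P_proj.
- exact: P_sum.
- move=> i j u v hij huv; exact: P_adj.
- exact: P_orth.
Qed.

Local Close Scope ring_scope.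

Theorem mainTheorem1 :
  [/\ alpha_lt_alpha_q Gp, (alpha Gp <= 5)%N & has_quantum_coclique Gp 6].
Proof.
have ha : (alpha Gp <= 5)%N by apply/bigmax_leqP => S; exact: indep_le5.
split => //; last exact: quantum6.
by exists 6; split; [apply: leq_ltn_trans ha _ | exact: quantum6].
Qed.
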